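(* In any execution of the algorithm described in the context on a camera object $S$ and an associated versioned CAS object $O$, suppose an invocation of initTS makes the timestamp of some VNode $n$ valid. Then $n$ is the head of the version list of $O$ both when that initTS reads $S.\mathit{timestamp}$ and when it performs its CAS on $n.ts$.
   Context: Camera $S$ has an integer field timestamp, initially 0; takeSnapshot(): read $t:=S.\mathit{timestamp}$, perform CAS$(S.\mathit{timestamp},t,t+1)$, return $t$. A VNode has fields val and nextv (both immutable after creation) and ts (an integer or special value TBD, initially TBD). Versioned CAS object $O$ has a field $\mathit{VHead}$. Constructor with value $v$: $\mathit{VHead}:=$ new VNode(val $v$, nextv NULL); initTS($\mathit{VHead}$). initTS($n$): if $n.ts=$TBD, read $c:=S.\mathit{timestamp}$ and CAS$(n.ts,\mathrm{TBD},c)$. readSnapshot($ts$): $node:=\mathit{VHead}$; initTS($node$); while $node.ts>ts$, $node:=node.nextv$; return $node.val$. vRead(): $h:=\mathit{VHead}$; initTS($h$); return $h.val$. vCAS(oldV,newV): $h:=\mathit{VHead}$; initTS($h$); if $h.val\neq$ oldV return false; if newV $=$ oldV return true; $m:=$ new VNode(val newV, nextv $h$); if CAS$(\mathit{VHead},h,m)$ succeeds, initTS($m$) and return true; else delete $m$, call initTS on the current value of $\mathit{VHead}$, return false. The version list of $O$ is obtained by starting at the VNode pointed to by $\mathit{VHead}$ and following nextv pointers; its head is the VNode pointed to by $\mathit{VHead}$. A VNode's timestamp is valid if its ts field is not TBD, invalid otherwise; ''makes the timestamp valid'' means its CAS on $n.ts$ changes it from TBD to an integer. *)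

(* Defs.v *)
(* An operational (interleaving, atomic-step) model of the
   camera object S and the versioned CAS object O of the paper. *)
From Stdlib Require Import Arith.

Set Implicit Arguments.

(* A VNode: val and nextv immutable; ts = None encodes TBD. *)
Record vnode (V : Type) := VNode { val : V; nextv : option nat; ts : option nat }.

(* What a process does after an initTS invocation returns. *)
Inductive cont (V : Type) :=
| K_ctor
| K_done                        (* return from the enclosing operation    *)
| K_rs (t : nat) (node : nat)   (* readSnapshot(t): enter the while loop  *)
| K_vread (h : nat)             (* vRead: return h.val                    *)
| K_vcas (oldV newV : V) (h : nat). (* vCAS: compare h.val with oldV ...  *)

Inductive pstate (V : Type) :=
| Idle
| TS_read                                   (* takeSnapshot: read S.ts    *)
| TS_cas (t : nat)                          (* takeSnapshot: CAS(S.ts,t,t+1) *)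
| Ctor_alloc (v : V)                        (* VHead := new VNode(v,NULL) *)
| IT_check (n : nat) (k : cont V)           (* initTS(n): test n.ts = TBD *)
| IT_read (n : nat) (k : cont V)            (* initTS(n): c := S.timestamp*)
| IT_cas (n c : nat) (k : cont V)           (* initTS(n): CAS(n.ts,TBD,c) *)
| Cont (k : cont V)                         (* initTS returned; resume k  *)
| RS_read (t : nat)                         (* readSnapshot: node := VHead*)
| RS_loop (t : nat) (node : nat)            (* readSnapshot: while test   *)
| VR_read                                   (* vRead: h := VHead          *)
| VC_read (oldV newV : V)                   (* vCAS: h := VHead           *)
| VC_cas (oldV newV : V) (h : nat)          (* vCAS: CAS(VHead, h, m)     *)
| VC_fail.                                  (* vCAS: initTS(current VHead)*)

(* Global configuration.  Node identifiers are natural numbers; [heap]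
   maps identifiers to allocated VNodes; [next_id] is the next fresh id. *)
Record config (V : Type) := Config {
  cam : nat;
  vhead : option nat;             (* O.VHead (None before construction) *)
  heap : nat -> option (vnode V);
  next_id : nat;
  ctor_started : bool;
  constructed : bool;             (* constructor of O has returned *)
  pc : nat -> pstate V }.

Arguments Config {V}.

Definition fupd {A : Type} (f : nat -> A) (x : nat) (a : A) : nat -> A :=
  fun y => if Nat.eqb y x then a else f y.

Definition set_pc {V} (C : config V) (p : nat) (s : pstate V) : config V :=
  Config (cam C) (vhead C) (heap C) (next_id C) (ctor_started C) (constructed C)
         (fupd (pc C) p s).
Definition set_cam {V} (C : config V) (x : nat) : config V :=
  Config x (vhead C) (heap C) (next_id C) (ctor_started C) (constructed C) (pc C).
Definition set_heap {V} (C : config V) (n : nat) (nd : vnode V) : config V :=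
  Config (cam C) (vhead C) (fupd (heap C) n (Some nd)) (next_id C)
         (ctor_started C) (constructed C) (pc C).
Definition set_vhead {V} (C : config V) (h : nat) : config V :=
  Config (cam C) (Some h) (heap C) (next_id C) (ctor_started C) (constructed C) (pc C).
Definition bump_id {V} (C : config V) : config V :=
  Config (cam C) (vhead C) (heap C) (S (next_id C)) (ctor_started C) (constructed C) (pc C).
Definition set_started {V} (C : config V) : config V :=
  Config (cam C) (vhead C) (heap C) (next_id C) true (constructed C) (pc C).
Definition set_constructed {V} (C : config V) : config V :=
  Config (cam C) (vhead C) (heap C) (next_id C) (ctor_started C) true (pc C).

Definition alloc_publish {V} (C : config V) (nd : vnode V) : config V :=
  set_vhead (bump_id (set_heap C (next_id C) nd)) (next_id C).

(* Next node visited by the readSnapshot while loop, if the loop continues.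
   (The paper's invariants guarantee ts is valid and nextv non-NULL here;
   in the impossible other cases the loop simply exits.) *)
Definition rs_next {V} (t : nat) (nd : vnode V) : option nat :=
  match ts nd, nextv nd with
  | Some x, Some nx => if t <? x then Some nx else None
  | _, _ => None
  end.

Definition init_config (V : Type) : config V :=
  Config 0 None (fun _ => None) 0 false false (fun _ => Idle V).

Inductive step {V : Type} : config V -> nat -> config V -> Prop :=
| st_inv_ts C p : pc C p = Idle V -> step C p (set_pc C p (TS_read V))
| st_inv_ctor C p v : pc C p = Idle V -> ctor_started C = false ->
    step C p (set_pc (set_started C) p (Ctor_alloc v))
| st_inv_rs C p t : pc C p = Idle V -> constructed C = true ->
    step C p (set_pc C p (RS_read V t))
| st_inv_vr C p : pc C p = Idle V -> constructed C = true ->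
    step C p (set_pc C p (VR_read V))
| st_inv_vc C p o nv : pc C p = Idle V -> constructed C = true ->
    step C p (set_pc C p (VC_read o nv))
| st_ts_read C p : pc C p = TS_read V -> step C p (set_pc C p (TS_cas V (cam C)))
| st_ts_cas C p t : pc C p = TS_cas V t ->
    step C p (set_pc (set_cam C (if Nat.eqb (cam C) t then S t else cam C)) p (Idle V))
| st_ctor C p v : pc C p = Ctor_alloc v ->
    step C p (set_pc (alloc_publish C (VNode v None None)) p
                     (IT_check (next_id C) (K_ctor V)))
| st_it_check_tbd C p n k nd : pc C p = IT_check n k -> heap C n = Some nd ->
    ts nd = None -> step C p (set_pc C p (IT_read n k))
| st_it_check_valid C p n k nd x : pc C p = IT_check n k -> heap C n = Some nd ->
    ts nd = Some x -> step C p (set_pc C p (Cont k))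
| st_it_read C p n k : pc C p = IT_read n k -> step C p (set_pc C p (IT_cas n (cam C) k))
| st_it_cas_succ C p n c k nd : pc C p = IT_cas n c k -> heap C n = Some nd ->
    ts nd = None ->
    step C p (set_pc (set_heap C n (VNode (val nd) (nextv nd) (Some c))) p (Cont k))
| st_it_cas_fail C p n c k nd x : pc C p = IT_cas n c k -> heap C n = Some nd ->
    ts nd = Some x -> step C p (set_pc C p (Cont k))
| st_k_ctor C p : pc C p = Cont (K_ctor V) ->
    step C p (set_pc (set_constructed C) p (Idle V))
| st_k_done C p : pc C p = Cont (K_done V) -> step C p (set_pc C p (Idle V))
| st_k_rs C p t node : pc C p = Cont (K_rs V t node) ->
    step C p (set_pc C p (RS_loop V t node))
| st_k_vread C p h : pc C p = Cont (K_vread V h) -> step C p (set_pc C p (Idle V))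
| st_k_vcas_neq C p o nv h nd : pc C p = Cont (K_vcas o nv h) -> heap C h = Some nd ->
    val nd <> o -> step C p (set_pc C p (Idle V))
| st_k_vcas_same C p o h nd : pc C p = Cont (K_vcas o o h) -> heap C h = Some nd ->
    val nd = o -> step C p (set_pc C p (Idle V))
| st_k_vcas_go C p o nv h nd : pc C p = Cont (K_vcas o nv h) -> heap C h = Some nd ->
    val nd = o -> nv <> o -> step C p (set_pc C p (VC_cas o nv h))
| st_rs_read C p t n : pc C p = RS_read V t -> vhead C = Some n ->
    step C p (set_pc C p (IT_check n (K_rs V t n)))
| st_rs_loop_next C p t node nd nx : pc C p = RS_loop V t node -> heap C node = Some nd ->
    rs_next t nd = Some nx -> step C p (set_pc C p (RS_loop V t nx))
| st_rs_loop_ret C p t node nd : pc C p = RS_loop V t node -> heap C node = Some nd ->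
    rs_next t nd = None -> step C p (set_pc C p (Idle V))
| st_vr_read C p h : pc C p = VR_read V -> vhead C = Some h ->
    step C p (set_pc C p (IT_check h (K_vread V h)))
| st_vc_read C p o nv h : pc C p = VC_read o nv -> vhead C = Some h ->
    step C p (set_pc C p (IT_check h (K_vcas o nv h)))
| st_vc_cas_succ C p o nv h : pc C p = VC_cas o nv h -> vhead C = Some h ->
    step C p (set_pc (alloc_publish C (VNode nv (Some h) None)) p
                     (IT_check (next_id C) (K_done V)))
| st_vc_cas_fail C p o nv h : pc C p = VC_cas o nv h -> vhead C <> Some h ->
    step C p (set_pc C p (VC_fail V))
| st_vc_fail C p h : pc C p = VC_fail V -> vhead C = Some h ->
    step C p (set_pc C p (IT_check h (K_done V))).

(* A finite execution of length N: configurations cfg 0 .. cfg N, where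
   step k (k < N) is taken by process [who k]. *)
Definition is_execution {V : Type} (N : nat) (cfg : nat -> config V) (who : nat -> nat)
  : Prop :=
  cfg 0 = init_config V /\ forall k, k < N -> step (cfg k) (who k) (cfg (S k)).

Definition ts_invalid {V} (C : config V) (n : nat) : Prop :=
  exists nd, heap C n = Some nd /\ ts nd = None.
Definition ts_valid {V} (C : config V) (n : nat) : Prop :=
  exists nd x, heap C n = Some nd /\ ts nd = Some x.

(* Main.v *)
Require Import Defs.
From Stdlib Require Import Arith Lia.

Section Proof.
Context {V : Type}.

Definition valid_in (H : nat -> option (vnode V)) h :=
  exists nd x, H h = Some nd /\ ts nd = Some x.
Definition kgood (n : nat) (k : cont V) :=
  match k with K_vcas _ _ h => n = h | _ => True end.
Definition kvalid H (k : cont V) :=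
  match k with K_vcas _ _ h => valid_in H h | _ => True end.
Definition good (H : nat -> option (vnode V)) (s : pstate V) : Prop :=
  match s with
  | IT_check n k | IT_read n k | IT_cas n _ k => H n <> None /\ kgood n k
  | Cont k => kvalid H k
  | VC_cas _ _ h => valid_in H h
  | _ => True
  end.

Arguments good : simpl never.

Record Inv (C : config V) : Prop := {
 I1 : forall n nd, heap C n = Some nd -> ts nd = None -> vhead C = Some n;
 I2 : forall n, next_id C <= n -> heap C n = None;
 I3 : forall n, vhead C = Some n -> heap C n <> None;
 I4 : vhead C = None -> forall n, heap C n = None;
 I5 : ctor_started C = false -> vhead C = None;
 I6 : forall q, good (heap C) (pc C q);
 I7 : forall q q' v v', pc C q = Ctor_alloc v -> pc C q' = Ctor_alloc v' -> q = q';
 I8 : forall q v, pc C q = Ctor_alloc v -> ctor_started C = true /\ vhead C = None }.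

Definition grow (H H' : nat -> option (vnode V)) :=
  forall n nd, H n = Some nd -> exists nd', H' n = Some nd' /\
     (forall x, ts nd = Some x -> exists x', ts nd' = Some x').

Lemma valid_grow H H' h : grow H H' -> valid_in H h -> valid_in H' h.
Proof.
  intros G [nd [x [E T]]]. destruct (G _ _ E) as [nd' [E' T']].
  destruct (T' _ T) as [x' T'']. exists nd', x'; auto.
Qed.

Lemma good_grow H H' s : grow H H' -> good H s -> good H' s.
Proof.
  intros G. destruct s; simpl; auto;
  try (intros [Hn Hk]; split; auto; intro E;
       destruct (H n) eqn:E0; [destruct (G _ _ E0) as [? [E1 _]]; congruence | congruence]).
  - destruct k; simpl; auto. apply valid_grow; auto.
  - apply valid_grow; auto.
Qed.

Lemma grow_refl H : grow H H.
Proof. intros n nd E; exists nd; split; eauto. Qed.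

Lemma fupd_eq {A} (f : nat -> A) x a : fupd f x a x = a.
Proof. unfold fupd; rewrite Nat.eqb_refl; auto. Qed.
Lemma fupd_neq {A} (f : nat -> A) x a y : y <> x -> fupd f x a y = f y.
Proof. intros; unfold fupd; destruct (Nat.eqb_spec y x); congruence. Qed.

Lemma pc_only C p s : Inv C -> good (heap C) s -> (forall v, s <> Ctor_alloc v) ->
  Inv (set_pc C p s).
Proof.
  intros [] Hg Hs; constructor; simpl; auto.
  - intro q; destruct (Nat.eq_dec q p); subst;
      [rewrite fupd_eq | rewrite fupd_neq]; auto.
  - intros q q' v v'.
    destruct (Nat.eq_dec q p); subst; [rewrite fupd_eq; intro E; edestruct Hs; eauto|rewrite fupd_neq; auto].
    destruct (Nat.eq_dec q' p); subst; [rewrite fupd_eq; intros _ E; edestruct Hs; eauto|rewrite fupd_neq; eauto].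
  - intros q v. destruct (Nat.eq_dec q p); subst; [rewrite fupd_eq; intro E; edestruct Hs; eauto|rewrite fupd_neq; eauto].
Qed.

Lemma set_cam_inv C x : Inv C -> Inv (set_cam C x).
Proof. intros []; constructor; simpl; auto. Qed.
Lemma set_constructed_inv C : Inv C -> Inv (set_constructed C).
Proof. intros []; constructor; simpl; auto. Qed.

Lemma step_grow C p C' : Inv C -> step C p C' -> grow (heap C) (heap C').
Proof.
  intros HI S; destruct S; simpl; try apply grow_refl.
  - intros n nd E. destruct (Nat.eq_dec n (next_id C)).
    + subst; rewrite (I2 _ HI) in E; [discriminate|lia].
    + exists nd; rewrite fupd_neq; eauto.
  - intros m nd0 E. destruct (Nat.eq_dec m n).
    + subst; rewrite fupd_eq. rewrite H0 in E; inversion E; subst.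
      eexists; split; eauto. simpl; eauto.
    + exists nd0; rewrite fupd_neq; eauto.
  - intros n nd E. destruct (Nat.eq_dec n (next_id C)).
    + subst; rewrite (I2 _ HI) in E; [discriminate|lia].
    + exists nd; rewrite fupd_neq; eauto.
Qed.

Lemma others_good C C' p s : Inv C -> grow (heap C) (heap C') ->
  pc C' = fupd (pc C) p s -> good (heap C') s -> forall q, good (heap C') (pc C' q).
Proof.
  intros HI G E Hs q; rewrite E. destruct (Nat.eq_dec q p); subst;
  [rewrite fupd_eq | rewrite fupd_neq]; auto.
  eapply good_grow; eauto. apply (I6 _ HI).
Qed.

Lemma inv_step C p C' : Inv C -> step C p C' -> Inv C'.
Proof.
  intros HI S. pose proof (step_grow _ _ _ HI S) as G.
  pose proof (I6 _ HI p) as Gp.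
  destruct S.
  26: {
    rewrite H in Gp; simpl in Gp. destruct Gp as [nd0 [x0 [Eh Th]]].
    unfold set_pc, alloc_publish, set_vhead, bump_id, set_heap in *; simpl in *.
    constructor; simpl.
    - intros m nd E T. destruct (Nat.eq_dec m (next_id C)); [subst; reflexivity|].
      rewrite fupd_neq in E by auto. pose proof (I1 _ HI _ _ E T). congruence.
    - intros m Hle. rewrite fupd_neq by lia. apply (I2 _ HI); lia.
    - intros m E; inversion E; subst; rewrite fupd_eq; discriminate.
    - discriminate.
    - intro Hs; apply (I5 _ HI) in Hs; congruence.
    - intro q; destruct (Nat.eq_dec q p); [subst; rewrite fupd_eq | rewrite fupd_neq by auto;
        eapply good_grow; [exact G| apply (I6 _ HI)]].
      unfold good. split; [rewrite fupd_eq; discriminate | exact I].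
    - intros q q' v v'.
      destruct (Nat.eq_dec q p); [subst; rewrite fupd_eq; discriminate|rewrite fupd_neq by auto].
      destruct (Nat.eq_dec q' p); [subst; rewrite fupd_eq; discriminate|rewrite fupd_neq by auto].
      apply (I7 _ HI).
    - intros q v. destruct (Nat.eq_dec q p); [subst; rewrite fupd_eq; discriminate|rewrite fupd_neq by auto].
      intro E; apply (I8 _ HI) in E; destruct E; congruence. }
  8: {
    destruct (I8 _ HI _ _ H) as [Hst Hvh]. pose proof (I4 _ HI Hvh) as Hemp.
    unfold set_pc, alloc_publish, set_vhead, bump_id, set_heap in *; simpl in *.
    constructor; simpl.
    - intros m nd E T. destruct (Nat.eq_dec m (next_id C)); [subst; reflexivity|].
      rewrite fupd_neq in E by auto. rewrite Hemp in E; discriminate.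
    - intros m Hle. rewrite fupd_neq by lia. apply (I2 _ HI); lia.
    - intros m E; inversion E; subst; rewrite fupd_eq; discriminate.
    - discriminate.
    - rewrite Hst; discriminate.
    - intro q; destruct (Nat.eq_dec q p); [subst; rewrite fupd_eq | rewrite fupd_neq by auto;
        eapply good_grow; [exact G| apply (I6 _ HI)]].
      unfold good. split; [rewrite fupd_eq; discriminate | exact I].
    - intros q q' v1 v2.
      destruct (Nat.eq_dec q p); [subst; rewrite fupd_eq; discriminate|rewrite fupd_neq by auto].
      intro E. exfalso. apply n. eapply (I7 _ HI); eauto.
    - intros q v1. destruct (Nat.eq_dec q p); [subst; rewrite fupd_eq; discriminate|rewrite fupd_neq by auto].
      intro E. exfalso. apply n. eapply (I7 _ HI); eauto. }
  2: {
    unfold set_pc, set_started in *; simpl in *.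
    constructor; simpl.
    - apply (I1 _ HI).
    - apply (I2 _ HI).
    - apply (I3 _ HI).
    - apply (I4 _ HI).
    - discriminate.
    - intro q; destruct (Nat.eq_dec q p); [subst; rewrite fupd_eq | rewrite fupd_neq by auto;
        eapply good_grow; [exact G| apply (I6 _ HI)]].
      unfold good; exact I.
    - intros q q' v1 v2.
      destruct (Nat.eq_dec q p); destruct (Nat.eq_dec q' p); subst; auto;
        repeat first [rewrite fupd_eq | rewrite fupd_neq by auto]; intros E1 E2;
        first [pose proof (I8 _ HI _ _ E1) as [? ?] | pose proof (I8 _ HI _ _ E2) as [? ?]]; congruence.
    - intros q v1. destruct (Nat.eq_dec q p); [subst; rewrite fupd_eq|rewrite fupd_neq by auto].
      + intros _; split; auto. apply (I5 _ HI); auto.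
      + intro E; apply (I8 _ HI) in E; destruct E; congruence. }
  all: apply pc_only; [ | | intros ? ?; discriminate]; try (rewrite H in Gp); unfold good in *; simpl in *; auto.
  all: try solve [split; auto; apply (I3 _ HI); auto].
  all: try solve [destruct Gp; auto].
  all: try apply set_cam_inv; try apply set_constructed_inv; auto.
  all: try solve [destruct k; simpl in *; auto; destruct Gp; subst; do 2 eexists; split; eauto].
  all: try solve [destruct k; simpl in *; auto; destruct Gp; subst; do 2 eexists; split;
                    [rewrite fupd_eq; reflexivity | reflexivity]].
  unfold set_heap; constructor; simpl.
  - intros m nd0 E T. destruct (Nat.eq_dec m n); [subst; rewrite fupd_eq in E; inversion E; subst; discriminate|].
    rewrite fupd_neq in E by auto. eapply (I1 _ HI); eauto.
  - intros m Hle. destruct (Nat.eq_dec m n); [subst; rewrite (I2 _ HI) in H0; [discriminate|lia]|].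
    rewrite fupd_neq by auto. apply (I2 _ HI); auto.
  - intros m E. destruct (Nat.eq_dec m n); [subst; rewrite fupd_eq; discriminate|].
    rewrite fupd_neq by auto. apply (I3 _ HI); auto.
  - intros Hv; rewrite (I4 _ HI Hv n) in H0; discriminate.
  - apply (I5 _ HI).
  - intro q; eapply good_grow; [exact G | apply (I6 _ HI)].
  - apply (I7 _ HI).
  - apply (I8 _ HI).
Qed.


Lemma inv_init : Inv (init_config V).
Proof.
  constructor; simpl; try discriminate; auto.
  intro q; unfold good; exact I.
Qed.

Lemma reach N (cfg : nat -> config V) who : is_execution N cfg who -> forall m, m <= N -> Inv (cfg m).
Proof.
  intros [H0 HS]. induction m; intros Hm.
  - rewrite H0; apply inv_init.
  - eapply inv_step; [apply IHm; lia | apply HS; lia].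
Qed.

Lemma valid_prop N (cfg : nat -> config V) who i n : is_execution N cfg who ->
  forall d, i + d <= N -> ts_valid (cfg i) n -> ts_valid (cfg (i + d)) n.
Proof.
  intros HE. induction d; intros Hd Hv.
  - rewrite Nat.add_0_r; auto.
  - rewrite Nat.add_succ_r.
    assert (HI : Inv (cfg (i + d))) by (eapply reach; eauto; lia).
    assert (St : step (cfg (i+d)) (who (i+d)) (cfg (S (i+d)))) by (apply (proj2 HE); lia).
    pose proof (step_grow _ _ _ HI St) as G.
    exact (valid_grow _ _ _ G (IHd ltac:(lia) Hv)).
Qed.

End Proof.

Theorem lemmaA4 (V : Type) (N : nat) (cfg : nat -> config V) (who : nat -> nat)
  (i j p n c : nat) (k k' : cont V) :
  is_execution N cfg who ->
  i < j -> j < N ->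
  who i = p -> who j = p ->
  (forall l, i < l < j -> who l <> p) ->
  pc (cfg i) p = IT_read n k ->
  pc (cfg j) p = IT_cas n c k' ->
  ts_invalid (cfg j) n -> ts_valid (cfg (S j)) n ->
  vhead (cfg i) = Some n /\ vhead (cfg j) = Some n.
Proof.
  intros HE Hij HjN _ _ _ Hpi _ [ndj [Ej Tj]] _.
  assert (Ii : Inv (cfg i)) by (eapply reach; eauto; lia).
  assert (Ij : Inv (cfg j)) by (eapply reach; eauto; lia).
  split; [| exact (I1 _ Ij _ _ Ej Tj)].
  pose proof (I6 _ Ii p) as Gp. rewrite Hpi in Gp. unfold good in Gp. destruct Gp as [Hn _].
  destruct (heap (cfg i) n) as [nd|] eqn:Ei; [|congruence].
  destruct (ts nd) as [x|] eqn:Ti.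
  - exfalso.
    assert (Hv : ts_valid (cfg (i + (j - i))) n).
    { apply (valid_prop _ _ _ _ _ HE); [lia|]. exists nd, x; auto. }
    replace (i + (j - i)) with j in Hv by lia.
    destruct Hv as [nd' [x' [E' T']]]. congruence.
  - exact (I1 _ Ii _ _ Ei Ti).
Qed.
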